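(* Consider $\dot{\mathbf{x}}(s)=f(\mathbf{x}(s),\mathbf{u}(s))$, $s\in[-t,0]$, $\mathbf{x}(-t)=x$, with $f$ Lipschitz in the state and measurable controls in $U\subset\mathbb{R}^{n_u}$; let $g$ be Lipschitz. Let $\mathcal{D}=\{(x_i,u_i,v_i)\}_{i=1}^N$ with $u_i\in U$, $v_i=f(x_i,u_i)$, and let $\mathcal{E}$ be a closed-valued map with $f(x,u_i)-v_i\in\mathcal{E}(x;x_i)$ for all $i$ and all $x$. Define (1) $V(x,t)=\sup_{\mathbf{u}(\cdot)}\min_{s\in[-t,0]}g(\mathbf{x}(s))$; (2) $\widetilde{V}(x,t)=\sup_{\widetilde{\mathbf{u}}(\cdot)}\min_{s\in[-t,0]}g(\widetilde{\mathbf{x}}(s))$, where $\widetilde{\mathbf{x}}$ solves the same dynamics from $x$ at time $-t$ with controls restricted to $\widetilde{\mathbf{u}}(s)\in\{u_i\}_{i=1}^N$; (3) $\widehat{V}(x,t)=\inf_{\xi_w}\sup_{\mathbf{v}(\cdot)}\min_{s\in[-t,0]}g(\widehat{\mathbf{x}}(s))$ for the game $\dot{\widehat{\mathbf{x}}}(s)=\mathbf{v}(s)+\mathbf{w}(s)$, $\widehat{\mathbf{x}}(-t)=x$, with leader action $\mathbf{v}(s)\in\{v_i\}_{i=1}^N$, follower action $\mathbf{w}(s)\in W(\widehat{\mathbf{x}}(s),\mathbf{v}(s))$ where $W(x,v_j)=\mathcal{E}(x;x_j)$, and $\xi_w$ ranging over follower non-anticipative strategies. Then $\widehat{V}(x,t)\le\widetilde{V}(x,t)\le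 V(x,t)$ for all $x\in\mathbb{R}^{n_x}$ and $t\ge0$.
   Context: A non-anticipative strategy $\xi_w$ maps leader signals $\mathbf{v}(\cdot)$ to follower signals $\mathbf{w}(\cdot)$ such that if two leader signals agree on $[-t,s]$, so do the images on $[-t,s]$. *)

(* Defs.v *)
From HB Require Import structures.
From mathcomp Require Import all_boot all_order all_algebra.
From mathcomp Require Import all_classical all_reals all_analysis.
Set Implicit Arguments. Unset Strict Implicit. Unset Printing Implicit Defensive.
Import Order.TTheory GRing.Theory Num.Theory.
Import numFieldNormedType.Exports.
Local Open Scope classical_set_scope.
Local Open Scope ring_scope.

Section Defs.
Variable R : realType.
Notation vec n := 'rV[R]_n.
Notation mu := (@lebesgue_measure R).

Definition horizon (t : R) : set R := `[- t, 0].

(* [xs] is the (integral-form / Caratheodory) solution on [-t,0] of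
   xs' = h, xs(-t) = x0: every component of h is Lebesgue integrable on
   [-t,0] and xs(s) = x0 + int_{-t}^s h for all s in [-t,0]. *)
Definition sol_int (n : nat) (t : R) (x0 : vec n) (h : R -> vec n)
  (xs : R -> vec n) : Prop :=
  (forall k : 'I_n, mu.-integrable (horizon t) (fun s => (h s 0 k)%:E)) /\
  (forall s, horizon t s -> forall k : 'I_n,
     (xs s 0 k)%:E = (x0 0 k)%:E + (\int[mu]_(tau in `[(- t)%R, s]) (h tau 0 k)%:E)%E).

Definition cost (n : nat) (g : vec n -> R) (t : R) (xs : R -> vec n) : \bar R :=
  ereal_inf [set (g (xs s))%:E | s in horizon t].

Definition admissible_control (m : nat) (t : R) (A : set (vec m))
  (u : R -> vec m) : Prop :=
  (forall k : 'I_m, measurable_fun (horizon t) (fun s => u s 0 k)) /\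
  (forall s, horizon t s -> A (u s)).

Definition value_fun (nx nu : nat) (f : vec nx -> vec nu -> vec nx)
  (g : vec nx -> R) (A : set (vec nu)) (x : vec nx) (t : R) : \bar R :=
  ereal_sup [set cost g t xs | xs in
    [set xs | exists u, admissible_control t A u /\
                        sol_int t x (fun s => f (xs s) (u s)) xs]].

(* Leader signals: measurable choices of a data index i(s) in 'I_N on
   [-t,0]; the leader's action is v(s) = v_{i(s)}. *)
Definition leader_signal (N : nat) (t : R) (sigma : R -> 'I_N) : Prop :=
  forall i : 'I_N, measurable (horizon t `&` (sigma @^-1` [set i])).

Definition non_anticipative (nx N : nat) (t : R)
  (xi : (R -> 'I_N) -> (R -> vec nx)) : Prop :=
  forall sigma1 sigma2, leader_signal t sigma1 -> leader_signal t sigma2 ->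
  forall s, horizon t s ->
    (forall tau, [set` `[- t, s]] tau -> sigma1 tau = sigma2 tau) ->
    (forall tau, [set` `[- t, s]] tau -> xi sigma1 tau = xi sigma2 tau).

Definition game_traj (nx N : nat) (vd : 'I_N -> vec nx) (t : R) (x : vec nx)
  (sigma : R -> 'I_N) (w : R -> vec nx) (xh : R -> vec nx) : Prop :=
  sol_int t x (fun s => vd (sigma s) + w s) xh.

Definition admissible_strategy (nx N : nat) (xd vd : 'I_N -> vec nx)
  (E : vec nx -> vec nx -> set (vec nx)) (t : R) (x : vec nx)
  (xi : (R -> 'I_N) -> (R -> vec nx)) : Prop :=
  non_anticipative t xi /\
  forall sigma, leader_signal t sigma ->
    exists xh, game_traj vd t x sigma (xi sigma) xh /\
      forall s, horizon t s -> E (xh s) (xd (sigma s)) (xi sigma s).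

Definition game_value (nx N : nat) (xd vd : 'I_N -> vec nx)
  (E : vec nx -> vec nx -> set (vec nx)) (g : vec nx -> R)
  (x : vec nx) (t : R) : \bar R :=
  ereal_inf [set ereal_sup [set cost g t xh | xh in
       [set xh | exists sigma, leader_signal t sigma /\
                   game_traj vd t x sigma (xi sigma) xh]]
    | xi in admissible_strategy xd vd E t x].

End Defs.

(* Main.v *)
Require Import Defs.
From HB Require Import structures.
From mathcomp Require Import all_boot all_order all_algebra.
From mathcomp Require Import all_classical all_reals all_analysis.
From mathcomp Require Import ring lra.
Import Order.TTheory GRing.Theory Num.Theory.
Import numFieldNormedType.Exports.
Local Open Scope classical_set_scope.
Local Open Scope ring_scope.

Section Helpers.
Variable R : realType.
Variable n : nat.

Lemma mx_entry_le (a : 'rV[R]_n) k : `|a 0 k| <= `|a|.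
Proof.
rewrite [leRHS]/Num.norm /= mx_normrE; apply/bigmax_geP; right => /=.
by exists (0, k).
Qed.

Lemma mx_norm_le (a : 'rV[R]_n) c : 0 <= c -> (forall k, `|a 0 k| <= c) -> `|a| <= c.
Proof.
move=> c0 ak; rewrite [leLHS]/Num.norm /= mx_normrE; apply/bigmax_leP; split => //.
by move=> [i j] _ /=; rewrite (ord1 i).
Qed.

Lemma cvg_rowcomp {T : Type} (F : set_system T) {FF : Filter F}
  (y : T -> 'rV[R]_n) (v : 'rV[R]_n) (H : 'rV[R]_n -> R) (c : R) :
  0 <= c -> (forall a b, `|H a - H b| <= c * `|a - b|) ->
  (forall k, (fun z => y z 0 k) @ F --> v 0 k) -> (fun z => H (y z)) @ F --> H v.
Proof.
move=> c0 HL yk; apply/cvgrPdist_lt => e e0.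
have c1 : 0 < c + 1 by rewrite ltr_wpDl.
have e1 : 0 < e / (c + 1) by rewrite divr_gt0.
have : \forall z \near F, forall k, `|v 0 k - y z 0 k| < e / (c + 1).
  by apply: filter_forall => k; have /cvgrPdist_lt := yk k; apply.
apply: filterS => z hz.
have h1 : `|v - y z| <= e / (c + 1).
  apply: mx_norm_le; first exact: ltW.
  by move=> k; rewrite !mxE; exact: ltW.
apply: le_lt_trans (HL _ _) _.
apply: le_lt_trans (ler_wpM2l c0 h1) _.
rewrite mulrA ltr_pdivrMr // mulrC ltr_pM2l //.
by rewrite ltrDl.
Qed.

Lemma geo_cvg (a : nat -> R) (c : R) :
  (forall m, `|a m.+1 - a m| <= c * (2^-1) ^+ m) ->
  cvgn a /\ forall m, `|limn a - a m| <= 2 * c * (2^-1) ^+ m.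
Proof.
set q : R := 2^-1 => ha.
have q0 : 0 <= q by rewrite /q invr_ge0.
have c0 : 0 <= c by have := ha 0%N; rewrite expr0 mulr1; apply: le_trans.
have q2 : forall j, q ^+ j = 2 * q ^+ j.+1.
  by move=> j; rewrite exprS mulrA /q divff ?mul1r // pnatr_eq0.
have P : forall m k, `|a (m + k)%N - a m| <= 2 * c * (q ^+ m - q ^+ (m + k)).
  move=> m; elim=> [|k IH]; first by rewrite addn0 !subrr normr0 mulr0.
  rewrite addnS.
  have -> : a (m + k).+1 - a m = (a (m + k).+1 - a (m + k)%N) + (a (m + k)%N - a m).
    by rewrite addrA subrK.
  apply: le_trans (ler_normD _ _) _.
  apply: le_trans (lerD (ha _) IH) _.
  rewrite (q2 (m + k)%N); set X := q ^+ (m + k).+1; set Q := q ^+ m.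
  by rewrite (_ : c * (2 * X) + 2 * c * (Q - 2 * X) = 2 * c * (Q - X)) //; ring.
have P' : forall m k, (m <= k)%N -> `|a k - a m| <= 2 * c * q ^+ m.
  move=> m k mk; rewrite -(subnKC mk); apply: le_trans (P _ _) _.
  rewrite ler_wpM2l ?mulr_ge0 // lerBlDr lerDl; exact: exprn_ge0.
pose b m := a m - 2 * c * q ^+ m.
have bh : {homo b : i j / (i <= j)%N >-> i <= j}.
  move=> i j ij; rewrite /b -(subnKC ij).
  have := P i (j - i)%N; rewrite ler_norml => /andP[h1 _].
  move: h1; set u := a (i + (j - i))%N; set X := q ^+ (i + (j - i)); set Y := q ^+ i.
  move=> h1; rewrite /b -/u -/X -/Y; nra.
have bu : has_ubound (range b).
  exists (a 0%N + 2 * c) => _ [k _ <-]; rewrite /b.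
  have := P' 0%N k (leq0n k); rewrite expr0 mulr1 ler_norml => /andP[_ h].
  have : 0 <= 2 * c * q ^+ k by rewrite mulr_ge0 ?exprn_ge0 // mulr_ge0.
  move: h; set u := a k; set X := 2 * c * q ^+ k; lra.
have cb := nondecreasing_cvgn bh bu.
have ca : a @ \oo --> sup (range b) + 2 * c * 0.
  have -> : a = fun m => b m + 2 * c * q ^+ m by apply/funext => m; rewrite /b subrK.
  apply: cvgD => //; apply: cvgM; first exact: cvg_cst.
  by apply: cvg_expr; rewrite ger0_norm // invf_lt1 // ltr1n.
have cva : cvgn a by apply/cvg_ex; eexists; exact: ca.
split => // m.
have nm : \forall k \near \oo, (m <= k)%N by exists m.
rewrite ler_norml; apply/andP; split.
  rewrite lerBrDl; apply: limr_ge => //; apply: filterS nm => k mk.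
  have := P' m k mk; rewrite ler_norml => /andP[h _]; move: h; set u := a k; set X := 2 * c * q ^+ m; lra.
rewrite lerBlDr; apply: limr_le => //; apply: filterS nm => k mk.
have := P' m k mk; rewrite ler_norml => /andP[_ h]; move: h; set u := a k; set X := 2 * c * q ^+ m; lra.
Qed.

Lemma geo0 (z c : R) : (forall m, `|z| <= c * (2^-1) ^+ m) -> z = 0.
Proof.
move=> hz.
have h : (fun m => c * (2^-1 : R) ^+ m) @ \oo --> c * 0.
  apply: cvgM; first exact: cvg_cst.
  by apply: cvg_expr; rewrite ger0_norm ?invr_ge0 // invf_lt1 // ltr1n.
rewrite mulr0 in h.
have : `|z| <= lim ((fun m => c * (2^-1 : R) ^+ m) @ \oo).
  by apply: limr_ge; [apply/cvg_ex; eexists; exact: h| exact: nearW].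
by rewrite (cvg_lim _ h) // normr_le0 => /eqP.
Qed.

End Helpers.

Section Integrals.
Variable R : realType.
Local Notation mu := (@lebesgue_measure R).

Lemma cont_e (l t : R) : continuous (fun z : R => expR (l * z + l * t)).
Proof.
move=> x.
have dg : is_derive x 1 (fun z : R => l * z + l * t) l.
  apply: is_derive_eq; rewrite addr0; exact: mulr1.
have dF := is_derive1_comp (is_derive_expR _) dg.
apply: differentiable_continuous; apply/derivable1_diffP.
exact: (@ex_derive _ _ _ _ _ _ _ dF).
Qed.

Lemma expint (l t s : R) : -t < s ->
  \int[mu]_(z in `[-t, s]) (expR (l * z + l * t) * l) = expR (l * s + l * t) - 1.
Proof.
move=> ts.
have dg : forall x : R, is_derive x 1 (fun z : R => l * z + l * t) l.
  move=> x; apply: is_derive_eq; rewrite addr0; exact: mulr1.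
have dF : forall x : R, is_derive x 1 (fun z => expR (l * z + l * t)) (expR (l * x + l * t) * l).
  move=> x; exact: (is_derive1_comp (is_derive_expR _) (dg x)).
have cF : forall x : R, {for x, continuous (fun z => expR (l * z + l * t))}.
  move=> x; apply: differentiable_continuous; apply/derivable1_diffP.
  exact: (@ex_derive _ _ _ _ _ _ _ (dF x)).
have cf : {within `[-t, s], continuous (fun z => expR (l * z + l * t) * l)}.
  apply: continuous_subspaceT => x; apply: cvgM; [exact: cF | exact: cvg_cst].
have dLR : derivable_oo_LRcontinuous (fun z => expR (l * z + l * t)) (-t) s.
  split.
  - by move=> x _; exact: (@ex_derive _ _ _ _ _ _ _ (dF x)).
  - exact: cvg_at_right_filter (cF _).
  - exact: cvg_at_left_filter (cF _).
have F' : {in `](-t), s[, derive1 (fun z => expR (l * z + l * t)) =1 (fun z => expR (l * z + l * t) * l)}.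
  by move=> x _; rewrite derive1E; exact: derive_val.
have := continuous_FTC2 ts cf dLR F'.
rewrite /Rintegral => ->; rewrite -EFinB /=.
by rewrite mulrN addNr expR0.
Qed.

End Integrals.

Section Picard.
Variables (R : realType) (n N : nat).
Variable G : 'rV[R]_n -> 'I_N -> 'rV[R]_n.
Variables (L t : R) (x : 'rV[R]_n).
Hypothesis L0 : 0 < L.
Hypothesis t0 : 0 <= t.
Hypothesis GL : forall i a b, `|G a i - G b i| <= L * `|a - b|.
Local Notation mu := (@lebesgue_measure R).
Local Notation LR := (measurableTypeR R).

Fixpoint Pic (sigma : R -> 'I_N) (m : nat) : R -> 'rV[R]_n :=
  match m with
  | 0 => fun _ => x
  | m.+1 => fun s => \row_k (x 0 k + \int[mu]_(z in `[-t, s]) (G (Pic sigma m z) (sigma z) 0 k))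
  end.

Definition Ysol sigma s : 'rV[R]_n := \row_k limn (fun m => Pic sigma m s 0 k).

Lemma Pic_causal s1 s2 s : (forall z, [set` `[-t, s]] z -> s1 z = s2 z) ->
  forall m z, [set` `[-t, s]] z -> Pic s1 m z = Pic s2 m z.
Proof.
move=> h; elim => [//|m IH] z hz /=; apply/rowP => k; rewrite !mxE; congr (_ + _).
apply: eq_Rintegral => w; rewrite inE => hw.
have hw' : [set` `[-t, s]] w.
  move: hw hz; rewrite /= !in_itv /= => /andP[a b] /andP[c d]; rewrite a /=.
  exact: le_trans b d.
by rewrite IH // h.
Qed.

Lemma Y_causal s1 s2 s : (forall z, [set` `[-t, s]] z -> s1 z = s2 z) ->
  forall z, [set` `[-t, s]] z -> Ysol s1 z = Ysol s2 z.
Proof.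
move=> h z hz; apply/rowP => k; rewrite !mxE.
rewrite (_ : (fun m => Pic s1 m z 0 k) = (fun m => Pic s2 m z 0 k)) //.
by apply/funext => m; rewrite (Pic_causal s1 s2 s h m z hz).
Qed.

Lemma mD : measurable (horizon t).
Proof. exact: measurable_itv. Qed.

Lemma sub_hor s : horizon t s -> [set` `[-t, s]] `<=` horizon t.
Proof.
rewrite /horizon /= in_itv /= => /andP[_ s0] w; rewrite /= !in_itv /= => /andP[-> b].
exact: le_trans b s0.
Qed.

Lemma mu_itv s : horizon t s -> (mu [set` `[(-t)%R, s]] < +oo)%E /\ fine (mu [set` `[(-t)%R, s]]) <= t.
Proof.
rewrite /horizon /= in_itv /= => /andP[ts s0].
rewrite lebesgue_measure_itv /= lte_fin.
case: ifP => _ /=; last by split => //.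
split; first by rewrite ltry.
rewrite /=; lra.
Qed.

Lemma mu_hor : (mu (horizon t) < +oo)%E.
Proof.
have h0 : horizon t 0 by rewrite /horizon /= in_itv /= lexx andbT oppr_le0.
exact: (mu_itv 0 h0).1.
Qed.

Lemma integ_of_bound (A : set R) (h : R -> R) c : measurable (A : set LR) -> (mu A < +oo)%E ->
  measurable_fun (A : set LR) h -> (forall z, A z -> `|h z| <= c) -> mu.-integrable A (EFin \o h).
Proof.
move=> mA muA mh hb; apply: measurable_bounded_integrable => //.
exists c; split; first exact: num_real.
by move=> M cM z Az; apply: le_trans (hb z Az) (ltW cM).
Qed.

Lemma int_bound (A : set R) (h : R -> R) c : measurable (A : set LR) -> (mu A < +oo)%E ->
  mu.-integrable A (EFin \o h) -> (forall z, A z -> `|h z| <= c) ->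
  `|\int[mu]_(z in A) h z| <= c * fine (mu A).
Proof.
move=> mA muA ih hb.
apply: le_trans (le_normr_Rintegral mA ih) _.
rewrite -Rintegral_cst //; apply: le_Rintegral => //.
- exact: integrable_norm.
- apply: (integ_of_bound _ _ `|c|) => //.
  all: try exact: measurable_cst.
  all: by move=> *; rewrite lexx.
Qed.

Lemma int_bound2 (A : set R) (h phi : R -> R) : measurable (A : set LR) ->
  mu.-integrable A (EFin \o h) -> mu.-integrable A (EFin \o phi) ->
  (forall z, A z -> `|h z| <= phi z) ->
  `|\int[mu]_(z in A) h z| <= \int[mu]_(z in A) phi z.
Proof.
move=> mA ih ip hb.
apply: le_trans (le_normr_Rintegral mA ih) _.
apply: le_Rintegral => //; exact: integrable_norm.
Qed.

Lemma HL i k a b : `|G a i 0 k - G b i 0 k| <= L * `|a - b|.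
Proof.
apply: le_trans (GL i a b); have := mx_entry_le _ _ (G a i - G b i) k.
by rewrite !mxE.
Qed.

Lemma meas_sigma sigma (y : R -> 'rV[R]_n) k : leader_signal t sigma ->
  (forall i, measurable_fun (horizon t) (fun z => G (y z) i 0 k)) ->
  measurable_fun (horizon t) (fun z => G (y z) (sigma z) 0 k).
Proof.
move=> hs hi.
apply: (eq_measurable_fun (fun z => \sum_(i < N)
   (\1_(horizon t `&` sigma @^-1` [set i]) z * G (y z) i 0 k))).
  move=> z; rewrite inE => hz.
  rewrite (bigD1 (sigma z)) //= big1 ?addr0.
    by rewrite indicE mem_set ?mul1r.
  move=> i hi'; rewrite indicE memNset ?mul0r // => -[_ /= hzi].
  by rewrite hzi eqxx in hi'.
apply: measurable_sum => i; apply: measurable_realfun.measurable_funM => //.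
Qed.

Lemma meas_cont (y : R -> 'rV[R]_n) :
  (forall k, {within horizon t, continuous (fun z => y z 0 k)}) ->
  forall i k, measurable_fun (horizon t) (fun z => G (y z) i 0 k).
Proof.
move=> hy i k; apply: measurable_realfun.subspace_continuous_measurable_fun; first exact: mD.
move=> z.
apply: (@cvg_rowcomp _ _ _ _ _ y (y z) (fun a => G a i 0 k) L).
- exact: subspace_filter.
- exact: ltW.
- move=> a b; exact: HL.
- move=> k'; exact: hy.
Qed.

Lemma intB (A : set R) (a b : R -> R) : measurable (A : set LR) ->
  mu.-integrable A (EFin \o a) -> mu.-integrable A (EFin \o b) ->
  mu.-integrable A (EFin \o (fun w => a w - b w)).
Proof.
move=> mA ia ib.
have -> : (EFin \o (fun w => a w - b w)) = (fun w => (a w)%:E - (b w)%:E)%E.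
  by apply/funext => w; rewrite /= EFinB.
exact: integrableB.
Qed.

Lemma integrable_sub (A B : set R) (f : R -> \bar R) : measurable (A : set LR) ->
  measurable (B : set LR) -> A `<=` B -> mu.-integrable B f -> mu.-integrable A f.
Proof. by move=> mA mB AB; exact: integrableS. Qed.

Section Main.
Variable sigma : R -> 'I_N.
Hypothesis hs : leader_signal t sigma.
Let P := Pic sigma.
Let B0 := \sum_(i < N) `|G x i|.
Let q : R := 2^-1.
Let lam := 2 * L.

Lemma B0_ge0 : 0 <= B0.
Proof. by apply: sumr_ge0 => i _. Qed.

Lemma Gbound a i : `|G a i| <= B0 + L * `|a - x|.
Proof.
have -> : G a i = G x i + (G a i - G x i) by rewrite addrC subrK.
apply: le_trans (ler_normD _ _) _; apply: lerD; last exact: GL.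
by rewrite /B0 (bigD1 i) //= lerDl sumr_ge0.
Qed.

Lemma Gcomp a i k : `|G a i 0 k| <= B0 + L * `|a - x|.
Proof. exact: le_trans (mx_entry_le _ _ _ k) (Gbound a i). Qed.

Definition Q m := (forall k, {within horizon t, continuous (fun z => P m z 0 k)}) /\
  exists C, 0 <= C /\ forall z, horizon t z -> `|P m z - x| <= C.

Lemma Int m : Q m -> forall k,
  mu.-integrable (horizon t) (fun z => (G (P m z) (sigma z) 0 k)%:E) /\
  measurable_fun (horizon t) (fun z => G (P m z) (sigma z) 0 k).
Proof.
move=> [hc [C [C0 hC]]] k.
have mf := meas_sigma sigma (P m) k hs (meas_cont (P m) hc ^~ k).
split => //.
apply: (integ_of_bound _ _ (B0 + L * C)).
- exact: mD.
- exact: mu_hor.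
- exact: mf.
- move=> z hz; apply: le_trans (Gcomp _ _ _) _.
  by rewrite lerD2l; apply: ler_wpM2l; [exact: ltW | exact: hC].
Qed.

Lemma Qall m : Q m.
Proof.
elim: m => [|m [hc [C [C0 hC]]]].
  split; first by move=> k z; exact: cvg_cst.
  by exists 0; split => // z _; rewrite /P /= subrr normr0.
have Qm : Q m by split => //; exists C.
have Im := Int m Qm.
have mt : -t <= 0 by rewrite oppr_le0.
split.
  move=> k.
  have hpc := parameterized_integral_continuous mt (Im k).1.
  have -> : (fun z => P m.+1 z 0 k) = (fun z => x 0 k +
     parameterized_integral mu (-t) z (fun w => G (P m w) (sigma w) 0 k)).
    by apply/funext => z; rewrite /P /= mxE.
  move=> z; apply: cvgD; [exact: cvg_cst | exact: hpc].
have c0 : 0 <= B0 + L * C by rewrite addr_ge0 ?B0_ge0 // mulr_ge0 // ltW.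
exists (t * (B0 + L * C)); split; first by rewrite mulr_ge0.
move=> z hz; apply: mx_norm_le; first by rewrite mulr_ge0.
move=> k; rewrite /P /= !mxE addrC addKr.
have [muI leI] := mu_itv z hz.
apply: le_trans (int_bound _ _ (B0 + L * C) _ muI _ _) _.
- exact: measurable_itv.
- apply: (integrable_sub _ _ _ _ _ (sub_hor z hz) (Im k).1); [exact: measurable_itv | exact: mD].
- move=> w hw; apply: le_trans (Gcomp _ _ _) _.
  by rewrite lerD2l; apply: ler_wpM2l; [exact: ltW | apply: hC; exact: sub_hor z hz w hw].
by rewrite mulrC ler_wpM2r.
Qed.

Lemma IntI m k z : horizon t z ->
  mu.-integrable [set` `[-t, z]] (fun w => (G (P m w) (sigma w) 0 k)%:E).
Proof.
move=> hz; apply: (integrable_sub _ _ _ _ _ (sub_hor z hz) (Int m (Qall m) k).1).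
- exact: measurable_itv.
- exact: mD.
Qed.

Lemma Pdiff m z k : horizon t z -> (P m.+2 z - P m.+1 z) 0 k =
  \int[mu]_(w in `[-t, z]) (G (P m.+1 w) (sigma w) 0 k - G (P m w) (sigma w) 0 k).
Proof.
move=> hz; rewrite /P /= !mxE RintegralB.
- by rewrite opprD addrACA subrr add0r.
- exact: measurable_itv.
- exact: (IntI m.+1 k z hz).
- exact: (IntI m k z hz).
Qed.

Lemma CE m z : horizon t z ->
  `|P m.+1 z - P m z| <= (t * B0) * q ^+ m * expR (lam * z + lam * t).
Proof.
have lam0 : 0 < lam by rewrite /lam mulr_gt0.
have q0 : 0 <= q by rewrite /q invr_ge0.
have A0 : 0 <= t * B0 by rewrite mulr_ge0 ?B0_ge0.
elim: m z => [|m IH] z hz.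
  have ez : 1 <= expR (lam * z + lam * t).
    apply: le_trans (expR_ge1Dx _); rewrite lerDl.
    move: hz; rewrite /horizon /= in_itv /= => /andP[h1 _]; nra.
  apply: mx_norm_le; first by rewrite mulr_ge0 // mulr_ge0 // exprn_ge0.
  move=> k; rewrite /P /= !mxE addrC addKr.
  have [muI leI] := mu_itv z hz.
  apply: le_trans (int_bound _ _ B0 _ muI _ _) _.
  - exact: measurable_itv.
  - exact: (IntI 0).
  - by move=> w _; have := Gcomp x (sigma w) k; rewrite subrr normr0 mulr0 addr0.
  rewrite expr0 mulr1 mulrC; apply: le_trans (ler_wpM2r B0_ge0 leI) _.
  by rewrite -{1}(mulr1 (t * B0)) ler_wpM2l.
have c0 : 0 <= t * B0 * q ^+ m.+1 by rewrite mulr_ge0 // exprn_ge0.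
apply: mx_norm_le; first by rewrite mulr_ge0 // expR_ge0.
move=> k; rewrite Pdiff //.
move: (hz); rewrite /horizon /= in_itv /= => /andP[tz z0].
rewrite le_eqVlt in tz; case/predU1P: tz => [tz|tz].
  rewrite -tz set_itv1 Rintegral_set1 normr0.
  by rewrite mulr_ge0 // expR_ge0.
set c := t * B0 * q ^+ m.+1.
have ce : continuous (fun w => expR (lam * w + lam * t) * lam).
  move=> w; apply: cvgM; last exact: cvg_cst.
  exact: cont_e.
have ie : mu.-integrable `[-t, z] (EFin \o (fun w => expR (lam * w + lam * t) * lam)).
  apply: continuous_compact_integrable; first exact: segment_compact.
  exact: continuous_subspaceT.
have ip : mu.-integrable `[-t, z] (EFin \o (fun w => c * (expR (lam * w + lam * t) * lam))).
  apply: continuous_compact_integrable; first exact: segment_compact.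
  apply: continuous_subspaceT => w; apply: cvgM; first exact: cvg_cst.
  exact: ce.
apply: le_trans (int_bound2 _ _ (fun w => c * (expR (lam * w + lam * t) * lam)) _ _ ip _) _.
- exact: measurable_itv.
- apply: intB; first exact: measurable_itv.
  + exact: (IntI m.+1 k z hz).
  + exact: (IntI m k z hz).
- move=> w hw; have hw' := sub_hor z hz w hw.
  apply: le_trans (HL _ _ _ _) _.
  apply: le_trans (ler_wpM2l (ltW L0) (IH w hw')) _.
  set e := expR _.
  rewrite (_ : L * (t * B0 * q ^+ m * e) = c * (e * lam)) //.
  by rewrite /c /lam /q exprS; field.
rewrite (@RintegralZl _ _ _ mu _ (fun w => expR (lam * w + lam * t) * lam) c); last 2 first.
- exact: measurable_itv.
- exact: ie.
rewrite expint //; apply: ler_wpM2l => //.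
by rewrite lerBlDr lerDl ler01.
Qed.


Let C2 := t * B0 * expR (lam * t).

Lemma C2_ge0 : 0 <= C2.
Proof. by rewrite /C2 mulr_ge0 ?expR_ge0 // mulr_ge0 ?B0_ge0. Qed.

Lemma step_bound m z : horizon t z -> `|P m.+1 z - P m z| <= C2 * q ^+ m.
Proof.
move=> hz; apply: le_trans (CE m z hz) _.
have q0 : 0 <= q by rewrite /q invr_ge0.
rewrite /C2 [in leRHS]mulrAC; apply: ler_wpM2l.
  by rewrite mulr_ge0 ?exprn_ge0 // mulr_ge0 ?B0_ge0.
rewrite ler_expR.
move: hz; rewrite /horizon /= in_itv /= => /andP[_ z0].
have lam0 : 0 < lam by rewrite /lam mulr_gt0.
nra.
Qed.

Lemma C2q_ge0 m : 0 <= 2 * C2 * q ^+ m.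
Proof.
have q0 : 0 <= q by rewrite /q invr_ge0.
apply: mulr_ge0; last exact: exprn_ge0.
apply: mulr_ge0 => //; exact: C2_ge0.
Qed.

Lemma Ycvg z k : horizon t z -> cvgn (fun m => P m z 0 k) /\
  forall m, `|Ysol sigma z 0 k - P m z 0 k| <= 2 * C2 * q ^+ m.
Proof.
move=> hz.
have H : forall m, `|P m.+1 z 0 k - P m z 0 k| <= C2 * q ^+ m.
  move=> m; apply: le_trans (step_bound m z hz).
  by have := mx_entry_le _ _ (P m.+1 z - P m z) k; rewrite !mxE.
have [h1 h2] := @geo_cvg R (fun m => P m z 0 k) C2 H.
by split => // m; rewrite /Ysol mxE; exact: h2.
Qed.

Lemma Ynorm z m : horizon t z -> `|Ysol sigma z - P m z| <= 2 * C2 * q ^+ m.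
Proof.
move=> hz; have q0 : 0 <= q by rewrite /q invr_ge0.
apply: mx_norm_le; first exact: C2q_ge0.
by move=> k; have := (Ycvg z k hz).2 m; rewrite !mxE.
Qed.

Lemma Ymeas k : measurable_fun (horizon t) (fun z => G (Ysol sigma z) (sigma z) 0 k).
Proof.
apply: (measurable_realfun.measurable_fun_cvg (h := fun m z => G (P m z) (sigma z) 0 k)).
  move=> m; exact: (Int m (Qall m) k).2.
move=> z hz.
apply: (@cvg_rowcomp _ _ _ _ _ (fun m => P m z) (Ysol sigma z) (fun a => G a (sigma z) 0 k) L).
- exact: ltW.
- move=> a b; exact: HL.
- move=> k'; rewrite /Ysol mxE; exact: (Ycvg z k' hz).1.
Qed.

Lemma Yint k : mu.-integrable (horizon t) (fun z => (G (Ysol sigma z) (sigma z) 0 k)%:E).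
Proof.
apply: (integ_of_bound _ _ (B0 + L * (2 * C2))).
- exact: mD.
- exact: mu_hor.
- exact: Ymeas.
- move=> z hz; apply: le_trans (Gcomp _ _ _) _.
  rewrite lerD2l; apply: ler_wpM2l; first exact: ltW.
  by have := Ynorm z 0 hz; rewrite expr0 mulr1.
Qed.

Lemma YintI k z : horizon t z ->
  mu.-integrable [set` `[-t, z]] (fun w => (G (Ysol sigma w) (sigma w) 0 k)%:E).
Proof.
move=> hz; apply: (integrable_sub _ _ _ _ _ (sub_hor z hz) (Yint k)).
- exact: measurable_itv.
- exact: mD.
Qed.

Lemma Yeq s k : horizon t s ->
  Ysol sigma s 0 k = x 0 k + \int[mu]_(z in `[-t, s]) G (Ysol sigma z) (sigma z) 0 k.
Proof.
move=> hs'.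
have q0 : 0 <= q by rewrite /q invr_ge0.
have q1 : q <= 1 by rewrite /q invf_le1 // ler1n.
have [muI leI] := mu_itv s hs'.
apply/subr0_eq; apply: (geo0 _ _ (2 * C2 + L * (2 * C2) * t)) => m.
set T := x 0 k + _.
have -> : Ysol sigma s 0 k - T = (Ysol sigma s 0 k - P m.+1 s 0 k) + (P m.+1 s 0 k - T).
  by rewrite addrA subrK.
apply: le_trans (ler_normD _ _) _.
have b1 : `|Ysol sigma s 0 k - P m.+1 s 0 k| <= 2 * C2 * q ^+ m.
  apply: le_trans ((Ycvg s k hs').2 m.+1) _.
  apply: ler_wpM2l; first by apply: mulr_ge0 => //; exact: C2_ge0.
  by rewrite exprS ler_piMl ?exprn_ge0.
have b2 : `|P m.+1 s 0 k - T| <= L * (2 * C2 * q ^+ m) * t.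
  rewrite /T /P /= mxE.
  rewrite (_ : forall a b c : R, a + b - (a + c) = b - c); last by move=> *; ring.
  rewrite -RintegralB; last 3 first.
  - exact: measurable_itv.
  - exact: (IntI m k s hs').
  - exact: (YintI k s hs').
  apply: le_trans (int_bound _ _ (L * (2 * C2 * q ^+ m)) _ muI _ _) _.
  - exact: measurable_itv.
  - apply: intB; first exact: measurable_itv.
    + exact: (IntI m k s hs').
    + exact: (YintI k s hs').
  - move=> w hw; have hw' := sub_hor s hs' w hw.
    apply: le_trans (HL _ _ _ _) _; apply: ler_wpM2l; first exact: ltW.
    by rewrite distrC; exact: Ynorm.
  apply: ler_wpM2l => //; apply: mulr_ge0; first exact: ltW.
  exact: C2q_ge0.
apply: le_trans (lerD b1 b2) _.
by rewrite le_eqVlt; apply/orP; left; apply/eqP; ring.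
Qed.

Lemma Ysol_spec :
  (forall k, mu.-integrable (horizon t) (fun s => (G (Ysol sigma s) (sigma s) 0 k)%:E)) /\
  (forall s, horizon t s -> forall k, (Ysol sigma s 0 k)%:E = (x 0 k)%:E +
     (\int[mu]_(z in `[(- t)%R, s]) (G (Ysol sigma z) (sigma z) 0 k)%:E)%E).
Proof.
split; first exact: Yint.
move=> s hs' k; rewrite (Yeq s k hs') EFinD; congr (_ + _)%E.
rewrite /Rintegral fineK //; apply: integrable_fin_num; first exact: measurable_itv.
exact: (YintI k s hs').
Qed.

End Main.

End Picard.

Theorem theorem4 (R : realType) (nx nu N : nat)
  (f : 'rV[R]_nx -> 'rV[R]_nu -> 'rV[R]_nx) (g : 'rV[R]_nx -> R)
  (U : set 'rV[R]_nu)
  (xd : 'I_N -> 'rV[R]_nx) (ud : 'I_N -> 'rV[R]_nu) (vd : 'I_N -> 'rV[R]_nx)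
  (E : 'rV[R]_nx -> 'rV[R]_nx -> set 'rV[R]_nx) :
  (exists Lf : R, forall u, U u -> forall x y : 'rV[R]_nx,
      `|f x u - f y u| <= Lf * `|x - y|) ->
  (exists Lg : R, forall x y : 'rV[R]_nx, `|g x - g y| <= Lg * `|x - y|) ->
  (forall i, U (ud i)) ->
  (forall i, vd i = f (xd i) (ud i)) ->
  (forall x y, closed (E x y)) ->
  (forall i x, E x (xd i) (f x (ud i) - vd i)) ->
  forall (x : 'rV[R]_nx) (t : R), 0 <= t ->
    (game_value xd vd E g x t <= value_fun f g (range ud) x t)%E /\
    (value_fun f g (range ud) x t <= value_fun f g U x t)%E.
Proof.
move=> [Lf hLf] _ hU _ _ hE x t t0.
set L := Num.max Lf 1.
have L0 : 0 < L by rewrite lt_max ltr01 orbT.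
pose G := fun (a : 'rV[R]_nx) (i : 'I_N) => f a (ud i).
have GL : forall i a b, `|G a i - G b i| <= L * `|a - b|.
  move=> i a b; apply: le_trans (hLf _ (hU i) a b) _.
  by apply: ler_wpM2r => //; rewrite le_max lexx.
split.
  pose xi := fun (sigma : R -> 'I_N) s => f (Ysol _ _ _ G t x sigma s) (ud (sigma s)) - vd (sigma s).
  have fe : forall sigma, (fun s => vd (sigma s) + xi sigma s) = (fun s => G (Ysol _ _ _ G t x sigma s) (sigma s)).
    by move=> sigma; apply/funext => s; rewrite /xi addrC subrK.
  have adm : admissible_strategy xd vd E t x xi.
    split.
      move=> s1 s2 _ _ s hs heq z hz.
      by rewrite /xi (Y_causal _ _ _ G t x s1 s2 s heq z hz) (heq z hz).
    move=> sigma hsig; exists (Ysol _ _ _ G t x sigma); split.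
      rewrite /game_traj fe; exact: (Ysol_spec _ _ _ G L t x L0 t0 GL sigma hsig).
    by move=> s _; exact: hE.
  have h1 : (game_value xd vd E g x t <= ereal_sup [set cost g t xh | xh in
       [set xh | exists sigma, leader_signal t sigma /\
                   game_traj vd t x sigma (xi sigma) xh]])%E.
    by apply: ereal_inf_lbound; exists xi.
  apply: le_trans h1 _; apply: ge_ereal_sup => _ [xh [sigma [hsig htraj]] <-].
  rewrite /game_traj fe in htraj.
  have [_ h3] := Ysol_spec _ _ _ G L t x L0 t0 GL sigma hsig.
  have eqY : forall s, horizon t s -> xh s = Ysol _ _ _ G t x sigma s.
    move=> s hs; apply/rowP => k; apply: EFin_inj.
    by rewrite (htraj.2 s hs k) (h3 s hs k).
  have -> : cost g t xh = cost g t (Ysol _ _ _ G t x sigma).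
    by rewrite /cost; congr ereal_inf; apply: eq_imagel => s hs; rewrite eqY.
  apply: ereal_sup_ubound; exists (Ysol _ _ _ G t x sigma) => //.
  exists (fun s => ud (sigma s)); split; last exact: (Ysol_spec _ _ _ G L t x L0 t0 GL sigma hsig).
  split; last by move=> s _; exists (sigma s).
  move=> k.
  exact: (@meas_sigma R nu N (fun _ i => ud i) t sigma (fun _ => 0) k hsig
            (fun i => measurable_cst _)).
apply: ereal_sup_le => _ [xs [u [[mu hu] hsol]] <-].
exists xs => //; exists u; split => //; split => // s hs.
by have [i _ <-] := hu s hs; exact: hU.
Qed.
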